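(* Let $(\Sigma,\Pi)$ be a first-order signature over a variable system with the de Bruijn property and $T$ a theory over it. Then the Lindenbaum–Tarski structure $\mathcal H_{\Sigma,\Pi,T}=(\mathcal F_\Sigma,\mathrm{Pr}_{\Sigma,\Pi,T},\forall,\exists)$ is a first-order hyperdoctrine over $\mathcal F_\Sigma$, and it has the universal model property: $(\Gamma,\phi)\le(\Gamma,\psi)$ in $\mathrm{Pr}_{\Sigma,\Pi,T}(\Gamma)$ if and only if $(\phi\Rightarrow_\Gamma\psi)\in\mathrm{Thm}(\Sigma,\Pi,T)$.
   Context: Type system: fix an infinite set $V$ of variables with decidable equality and a fresh variable provider: functions $\varphi,\mathsf{fr}$ assigning to each finite $X\subseteq V$ an inhabited $\varphi(X)\subseteq V\setminus X$ and $\mathsf{fr}(X)\in\varphi(X)$; de Bruijn property: $\varphi(X)=\{\mathsf{fr}(X)\}$. Disjoint sets $F$ (function symbols), $T$ (type symbols). Preelements: terms from variables and $F$; pretypes $S(t_1,\ldots,t_n)$, $S\in T$. $\mathrm V(E)$: variables of $E$; $E[\bar a/\bar x]$: simultaneous substitution. Precontext $\Gamma=x_1:A_1,\ldots,x_n:A_n$ with $x_k\in\varphi(\{x_1,\ldots,x_{k-1}\})$, $\mathrm V(A_k)\subseteq\{x_1,\ldots,x_{k-1}\}$; $\mathrm{OV}(\Gamma)=x_1,\ldots,x_n$; $\mathrm{Fresh}(\Gamma)=\varphi(\mathrm V(\Gamma))$, $\mathrm{fresh}(\Gamma)=\mathsf{fr}(\mathrm V(\Gamma))$; $E[\bar a/\Gamma]=E[\bar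 a/x_1,\ldots,x_n]$. Top variables $\mathrm{TV}(\langle\rangle)=\emptyset$, $\mathrm{TV}(\Gamma,x:A)=(\mathrm{TV}(\Gamma)\setminus\mathrm V(A))\cup\{x\}$; a determining sequence is a strictly increasing $\bar i=i_1,\ldots,i_k$ with $\mathrm{TV}(\Gamma)\subseteq\{x_{i_1},\ldots,x_{i_k}\}$, $\bar a_{\bar i}=a_{i_1},\ldots,a_{i_k}$. Declarations $(\Gamma,S,\bar i)$ and $(\Gamma,f,\bar i,U)$ ($\mathrm V(U)\subseteq\mathrm V(\Gamma)$), each symbol at most once. $\mathcal J(\Sigma)$: smallest set of judgements closed under (R1) $\langle\rangle$ context; (R2) $\Gamma$ context, $A$ type $(\Gamma)$ $\Rightarrow$ $\Gamma,x:A$ context ($x\in\mathrm{Fresh}(\Gamma)$); (R3) $x_1:A_1,\ldots,x_n:A_n$ context $\Rightarrow$ $x_i:A_i\ (x_1:A_1,\ldots,x_n:A_n)$; (R4) $(\Gamma,S,\bar i)\in\Sigma$, $\bar a:\Delta\to\Gamma$ $\Rightarrow$ $S(\bar a_{\bar i})$ type $(\Delta)$; (R5) $(\Gamma,f,\bar i,U)\in\Sigma$, $\bar a:\Delta\to\Gamma$, $U[\bar a/\Gamma]$ type $(\Delta)$ $\Rightarrow$ $f(\bar a_{\bar i}):U[\bar a/\Gamma]\ (\Delta)$; where ''$\bar a:\Delta\to\Gamma$'' abbreviates $\Delta$ context, $\Gamma$ context, $a_k:A_k[a_1,\ldots,a_{k-1}/x_1,\ldots,x_{k-1}]\ (\Delta)$.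 $\Sigma$ is a signature if declared contexts are contexts and declared $U$ are types in $\mathcal J(\Sigma)$. Cwf: a category $\mathcal C$ with terminal object; classes $\mathrm{Ty}(\Gamma)$ with functorial substitution $A\{f\}$; context extension $\Gamma.A$ with $\mathrm p(A):\Gamma.A\to\Gamma$; classes $\mathrm{Tm}(\Gamma,A)$ with functorial $a\{f\}\in\mathrm{Tm}(\Delta,A\{f\})$; $\mathrm v_A\in\mathrm{Tm}(\Gamma.A,A\{\mathrm p(A)\})$; $\langle f,a\rangle_A:\Delta\to\Gamma.A$ for $a\in\mathrm{Tm}(\Delta,A\{f\})$ with $\mathrm p(A)\langle f,a\rangle_A=f$, $\mathrm v_A\{\langle f,a\rangle_A\}=a$, $\langle\mathrm p(A)h,\mathrm v_A\{h\}\rangle_A=h$, $\langle f,a\rangle_A g=\langle fg,a\{g\}\rangle_A$; $f.A=\langle f\circ\mathrm p(A\{f\}),\mathrm v_{A\{f\}}\rangle_A:\Delta.A\{f\}\to\Gamma.A$. The cwf $\mathcal F_\Sigma$: objects are contexts $\Gamma$ (i.e. ($\Gamma$ context)$\in\mathcal J(\Sigma)$); morphisms $(\Delta,\Gamma,\bar a)$ with $\bar a:\Delta\to\Gamma$ in $\mathcal J(\Sigma)$, composed by substitution, identity $(\Gamma,\Gamma,\mathrm{OV}(\Gamma))$; $\mathrm{Ty}(\Gamma)=\{(\Gamma,A):(A\text{ type }(\Gamma))\in\mathcal J(\Sigma)\}$, $(\Gamma,A)\{(\Delta,\Gamma,\bar a)\}=(\Delta,A[\bar a/\Gamma])$; $\mathrm{Tm}(\Gamma,(\Gamma,A))=\{((\Gamma,A),a):(a:A\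 (\Gamma))\in\mathcal J(\Sigma)\}$; $\Gamma.(\Gamma,S)=\langle\Gamma,\mathrm{fresh}(\Gamma):S\rangle$, $\mathrm p=(\Gamma.(\Gamma,S),\Gamma,\mathrm{OV}(\Gamma))$, $\mathrm v=((\Gamma.(\Gamma,S),S),\mathrm{fresh}(\Gamma))$, $\langle(\Delta,\Gamma,\bar s),((\Delta,S[\bar s/\Gamma]),b)\rangle=(\Delta,\Gamma.(\Gamma,S),(\bar s,b))$. Heyting (pre)algebra: a preorder $\le$ (not necessarily antisymmetric) with $\top,\bot,\wedge,\vee,\to$ satisfying $\bot\le x\le\top$, $z\le x\wedge y$ iff $z\le x$ and $z\le y$, $x\vee y\le z$ iff $x\le z$ and $y\le z$, $z\le(x\to y)$ iff $z\wedge x\le y$; morphisms are monotone maps preserving the operations and constants. A first-order hyperdoctrine over a cwf $\mathcal C$ is $(\mathcal C,\mathrm{Pr},\forall,\exists)$ with $\mathrm{Pr}:\mathcal C^{\mathrm{op}}\to\mathrm{Heyting}$ a functor ($R\{f\}=\mathrm{Pr}(f)(R)$) and, for $S\in\mathrm{Ty}(\Gamma)$, monotone $\forall_S,\exists_S:\mathrm{Pr}(\Gamma.S)\to\mathrm{Pr}(\Gamma)$ with $Q\le\forall_S(R)$ iff $Q\{\mathrm p(S)\}\le R$, and $\exists_S(R)\le Q$ iff $R\le Q\{\mathrm p(S)\}$ ($Q\in\mathrm{Pr}(\Gamma)$, $R\in\mathrm{Pr}(\Gamma.S)$), and for $f:\Delta\to\Gamma$: $\forall_S(R)\{f\}=\forall_{S\{f\}}(R\{f.S\})$,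 $\exists_S(R)\{f\}=\exists_{S\{f\}}(R\{f.S\})$. Logic: predicate symbols from a set $P$ disjoint from $F\cup T$; a predicate declaration is $(\Gamma,\bar i,R)$ with ($\Gamma$ context)$\in\mathcal J(\Sigma)$, $\bar i$ determining, $R\in P$; a predicate signature $\Pi$ declares each symbol at most once. $\mathrm{Form}(\Sigma,\Pi)$ is the smallest set of judgements ''$\phi$ form $(\Gamma)$'' with: $R(\bar a_{\bar i})$ form $(\Delta)$ for $(\Gamma,\bar i,R)\in\Pi$ and $\bar a:\Delta\to\Gamma$ in $\mathcal J(\Sigma)$; $\bot,\top$ form $(\Gamma)$ for contexts $\Gamma$; $(\phi\circ\psi)$ form $(\Gamma)$ for $\circ\in\{\wedge,\vee,\to\}$ from $\phi,\psi$ form $(\Gamma)$; $(Qx:A)\phi$ form $(\Gamma)$ for $Q\in\{\forall,\exists\}$ from $\phi$ form $(\Gamma,x:A)$ (with $(A\text{ type }(\Gamma))\in\mathcal J(\Sigma)$). Capture-avoiding substitution for $\bar a:\Delta\to\Gamma$: $\phi\{(\Delta,\Gamma,\bar a)\}=\phi[\bar a/\Gamma]$ for atomic $\phi$; it commutes with $\top,\bot,\wedge,\vee,\to$; and $((Qx:A)\theta)\{(\Delta,\Gamma,\bar a)\}=(Qy:A[\bar a/\Gamma])\,\theta\{(\langle\Delta,y:A[\bar a/\Gamma]\rangle,\langle\Gamma,x:A\rangle,(\bar a,y))\}$ with $y=\mathrm{fresh}(\Delta)$. A sequent is $\phi\Rightarrow_\Gamma\psi$ with $\phi,\psi$ form $(\Gamma)$;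 a theory is a set of sequents. Write $\mathbf p_\Gamma(x:A)=(\langle\Gamma,x:A\rangle,\Gamma,\mathrm{OV}(\Gamma))$. $\mathrm{Thm}(\Sigma,\Pi,T)$ is the smallest set of sequents containing $T$ and closed under: $\phi\Rightarrow_\Gamma\phi$; cut (from $\phi\Rightarrow_\Gamma\theta$, $\theta\Rightarrow_\Gamma\psi$ infer $\phi\Rightarrow_\Gamma\psi$); $\theta\wedge\psi\Rightarrow_\Gamma\theta$, $\theta\wedge\psi\Rightarrow_\Gamma\psi$, from $\phi\Rightarrow_\Gamma\theta$, $\phi\Rightarrow_\Gamma\psi$ infer $\phi\Rightarrow_\Gamma\theta\wedge\psi$, $\phi\Rightarrow_\Gamma\top$; $\theta\Rightarrow_\Gamma\theta\vee\psi$, $\psi\Rightarrow_\Gamma\theta\vee\psi$, from $\theta\Rightarrow_\Gamma\phi$, $\psi\Rightarrow_\Gamma\phi$ infer $\theta\vee\psi\Rightarrow_\Gamma\phi$, $\bot\Rightarrow_\Gamma\phi$; $\theta\wedge\psi\Rightarrow_\Gamma\phi$ iff $\theta\Rightarrow_\Gamma\psi\to\phi$ (both directions as rules); $\phi\{\mathbf p_\Gamma(x:A)\}\Rightarrow_{\Gamma,x:A}\psi$ iff $\phi\Rightarrow_\Gamma(\forall x:A)\psi$ (both directions); $\psi\Rightarrow_{\Gamma,x:A}\phi\{\mathbf p_\Gamma(x:A)\}$ iff $(\exists x:A)\psi\Rightarrow_\Gamma\phi$ (both directions); and substitution: from $\phi\Rightarrow_\Gamma\psi$ and $\bar a:\Delta\to\Gamma$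 in $\mathcal J(\Sigma)$ infer $\phi\{(\Delta,\Gamma,\bar a)\}\Rightarrow_\Delta\psi\{(\Delta,\Gamma,\bar a)\}$. Lindenbaum–Tarski structure: $\mathrm{Pr}_{\Sigma,\Pi,T}(\Gamma)=\{(\Gamma,\phi):(\phi\text{ form }(\Gamma))\in\mathrm{Form}(\Sigma,\Pi)\}$ ordered by $(\Gamma,\phi)\le(\Gamma,\psi)$ iff $(\phi\Rightarrow_\Gamma\psi)\in\mathrm{Thm}(\Sigma,\Pi,T)$, with Heyting operations given by the connectives; $\mathrm{Pr}((\Delta,\Gamma,\bar a))(\Gamma,\phi)=(\Delta,\phi\{(\Delta,\Gamma,\bar a)\})$; $\forall_{(\Gamma,A)}(\langle\Gamma,x:A\rangle,\psi)=(\Gamma,(\forall x:A)\psi)$ and $\exists_{(\Gamma,A)}(\langle\Gamma,x:A\rangle,\psi)=(\Gamma,(\exists x:A)\psi)$. *)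

(* Defs.v *)
From mathcomp Require Import all_boot.
Set Implicit Arguments. Unset Strict Implicit. Unset Printing Implicit Defensive.

(* V : variables (decidable equality); Fsym, Tsym, Psym : function, type   *)
(* and predicate symbols (disjoint by being distinct types).  Finite sets  *)
(* of variables are represented by lists; vphi X is the set phi(X) (as a   *)
(* predicate) and vfr X = fr(X).                                           *)
Record lang := Lang {
  V : eqType;
  Fsym : Type;
  Tsym : Type;
  Psym : Type;
  vphi : seq V -> V -> Prop;
  vfr : seq V -> V
}.

Definition fresh_provider (L : lang) : Prop :=
  (forall X : seq (V L), exists v, v \notin X) /\
  (forall X Y : seq (V L), X =i Y ->                               (* functions of finite SETS *)
      (forall v, @vphi L X v <-> @vphi L Y v) /\ @vfr L X = @vfr L Y) /\
  (forall X v, @vphi L X v -> v \notin X) /\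
  (forall X, @vphi L X (@vfr L X)).

Definition de_bruijn (L : lang) : Prop :=
  forall X v, @vphi L X v <-> v = @vfr L X.

Section Syntax.
Variable L : lang.

Inductive term : Type :=
| tvar (x : V L)
| tapp (f : Fsym L) (args : seq term).

Inductive pretype : Type := ptype (S : Tsym L) (args : seq term).

Fixpoint tvars (t : term) : seq (V L) :=
  match t with
  | tvar x => [:: x]
  | tapp _ ts => (fix go (ts : seq term) : seq (V L) :=
                   match ts with [::] => [::] | t :: ts' => tvars t ++ go ts' end) ts
  end.

Definition ptvars (A : pretype) : seq (V L) :=
  let: ptype _ ts := A in flatten (map tvars ts).

Fixpoint tsubst (xs : seq (V L)) (as_ : seq term) (t : term) : term :=
  match t with
  | tvar x => if x \in xs then nth (tvar x) as_ (index x xs) else tvar x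
  | tapp f ts => tapp f (map (tsubst xs as_) ts)
  end.

Definition psubst (xs : seq (V L)) (as_ : seq term) (A : pretype) : pretype :=
  let: ptype S0 ts := A in ptype S0 (map (tsubst xs as_) ts).

Definition ctx := seq (V L * pretype).

Definition OV (G : ctx) : seq (V L) := map fst G.
Definition ctx_vars (G : ctx) : seq (V L) := flatten (map (fun p => p.1 :: ptvars p.2) G).
Definition Fresh (G : ctx) : V L -> Prop := @vphi L (ctx_vars G).
Definition fresh (G : ctx) : V L := @vfr L (ctx_vars G).
Definition idm (G : ctx) : seq term := map tvar (OV G).

Definition is_precontext (G : ctx) : Prop :=
  forall k x A, onth G k = Some (x, A) ->
    @vphi L (take k (OV G)) x /\ {subset ptvars A <= take k (OV G)}.

Definition TV (G : ctx) : seq (V L) :=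
  foldl (fun acc p => rcons [seq y <- acc | y \notin ptvars p.2] p.1) [::] G.

(* selection a_{i_1}, ..., a_{i_k}  (indices are 0-based) *)
Definition sel {X : Type} (ix : seq nat) (s : seq X) : seq X := pmap (onth s) ix.

Definition determining (G : ctx) (ix : seq nat) : Prop :=
  sorted ltn ix /\ all (fun i => i < size G) ix /\
  {subset TV G <= sel ix (OV G)}.

Inductive judg : Type :=
| JCtx (G : ctx)
| JTy (G : ctx) (A : pretype)
| JTm (G : ctx) (a : term) (A : pretype).

(* a signature: each symbol declared at most once (partial functions) *)
Record signature := Signature {
  sdecl : Tsym L -> option (ctx * seq nat);
  fdecl : Fsym L -> option (ctx * seq nat * pretype)
}.

Inductive J (Sg : signature) : judg -> Prop :=
| R1 : J Sg (JCtx [::])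
| R2 G A x : J Sg (JCtx G) -> J Sg (JTy G A) -> Fresh G x -> J Sg (JCtx (rcons G (x, A)))
| R3 G i x A : J Sg (JCtx G) -> onth G i = Some (x, A) -> J Sg (JTm G (tvar x) A)
| R4 S0 G ix D as_ : sdecl Sg S0 = Some (G, ix) ->
    J Sg (JCtx D) -> J Sg (JCtx G) -> size as_ = size G ->
    (forall k a x A, onth as_ k = Some a -> onth G k = Some (x, A) ->
        J Sg (JTm D a (psubst (take k (OV G)) (take k as_) A))) ->
    J Sg (JTy D (ptype S0 (sel ix as_)))
| R5 f G ix U D as_ : fdecl Sg f = Some (G, ix, U) ->
    J Sg (JCtx D) -> J Sg (JCtx G) -> size as_ = size G ->
    (forall k a x A, onth as_ k = Some a -> onth G k = Some (x, A) ->
        J Sg (JTm D a (psubst (take k (OV G)) (take k as_) A))) ->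
    J Sg (JTy D (psubst (OV G) as_ U)) ->
    J Sg (JTm D (tapp f (sel ix as_)) (psubst (OV G) as_ U)).

Definition is_morph (Sg : signature) (D G : ctx) (as_ : seq term) : Prop :=
  J Sg (JCtx D) /\ J Sg (JCtx G) /\ size as_ = size G /\
  (forall k a x A, onth as_ k = Some a -> onth G k = Some (x, A) ->
      J Sg (JTm D a (psubst (take k (OV G)) (take k as_) A))).

Definition is_signature (Sg : signature) : Prop :=
  (forall S0 G ix, sdecl Sg S0 = Some (G, ix) ->
     is_precontext G /\ determining G ix /\ J Sg (JCtx G)) /\
  (forall f G ix U, fdecl Sg f = Some (G, ix, U) ->
     is_precontext G /\ determining G ix /\ {subset ptvars U <= ctx_vars G} /\
     J Sg (JCtx G) /\ J Sg (JTy G U)).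

Definition F_ob (Sg : signature) (G : ctx) : Prop := J Sg (JCtx G).
Definition F_ty (Sg : signature) (G : ctx) (A : pretype) : Prop := J Sg (JTy G A).
(* (D,G,as) o (E,D,bs) = (E,G,as[bs/D]) *)
Definition F_comp (D : ctx) (as_ bs : seq term) : seq term := map (tsubst (OV D) bs) as_.
(* (G,A){(D,G,as)} = (D, A[as/G]) *)
Definition F_tysub (G : ctx) (as_ : seq term) (A : pretype) : pretype := psubst (OV G) as_ A.
Definition F_ext (G : ctx) (A : pretype) : ctx := rcons G (fresh G, A).
(* p(G,A) = (G.A, G, OV(G)), as a list of terms *)
Definition F_p (G : ctx) : seq term := idm G.
(* f.S = < f o p(S{f}), v_{S{f}} > for f = (D,G,as), S = (G,A) :
   a morphism F_ext D (F_tysub G as A) -> F_ext G A *)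
Definition F_q (D G : ctx) (as_ : seq term) (A : pretype) : seq term :=
  rcons (F_comp D as_ (F_p D)) (tvar (fresh D)).

Definition psig := Psym L -> option (ctx * seq nat).

Definition is_psig (Sg : signature) (Pi : psig) : Prop :=
  forall R G ix, Pi R = Some (G, ix) -> J Sg (JCtx G) /\ determining G ix.

Inductive form : Type :=
| FPred (R : Psym L) (args : seq term)
| FBot | FTop
| FAnd (p q : form) | FOr (p q : form) | FImp (p q : form)
| FAll (x : V L) (A : pretype) (p : form)
| FEx (x : V L) (A : pretype) (p : form).

Inductive form_j (Sg : signature) (Pi : psig) : ctx -> form -> Prop :=
| FJpred R G ix D as_ : Pi R = Some (G, ix) -> is_morph Sg D G as_ ->
    form_j Sg Pi D (FPred R (sel ix as_))
| FJbot G : J Sg (JCtx G) -> form_j Sg Pi G FBot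
| FJtop G : J Sg (JCtx G) -> form_j Sg Pi G FTop
| FJand G p q : form_j Sg Pi G p -> form_j Sg Pi G q -> form_j Sg Pi G (FAnd p q)
| FJor G p q : form_j Sg Pi G p -> form_j Sg Pi G q -> form_j Sg Pi G (FOr p q)
| FJimp G p q : form_j Sg Pi G p -> form_j Sg Pi G q -> form_j Sg Pi G (FImp p q)
| FJall G x A p : J Sg (JTy G A) -> form_j Sg Pi (rcons G (x, A)) p -> form_j Sg Pi G (FAll x A p)
| FJex G x A p : J Sg (JTy G A) -> form_j Sg Pi (rcons G (x, A)) p -> form_j Sg Pi G (FEx x A p).

Fixpoint fsubst (D G : ctx) (as_ : seq term) (p : form) : form :=
  match p with
  | FPred R ts => FPred R (map (tsubst (OV G) as_) ts)
  | FBot => FBot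
  | FTop => FTop
  | FAnd p q => FAnd (fsubst D G as_ p) (fsubst D G as_ q)
  | FOr p q => FOr (fsubst D G as_ p) (fsubst D G as_ q)
  | FImp p q => FImp (fsubst D G as_ p) (fsubst D G as_ q)
  | FAll x A th =>
      let A' := psubst (OV G) as_ A in let y := fresh D in
      FAll y A' (fsubst (rcons D (y, A')) (rcons G (x, A)) (rcons as_ (tvar y)) th)
  | FEx x A th =>
      let A' := psubst (OV G) as_ A in let y := fresh D in
      FEx y A' (fsubst (rcons D (y, A')) (rcons G (x, A)) (rcons as_ (tvar y)) th)
  end.

Definition wk (G : ctx) (x : V L) (A : pretype) (p : form) : form :=
  fsubst (rcons G (x, A)) G (idm G) p.

(* a theory: a set of sequents  p =>_G q *)
Definition theory := ctx -> form -> form -> Prop.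

Definition is_theory (Sg : signature) (Pi : psig) (T : theory) : Prop :=
  forall G p q, T G p q -> form_j Sg Pi G p /\ form_j Sg Pi G q.

Inductive thm (Sg : signature) (Pi : psig) (T : theory) : ctx -> form -> form -> Prop :=
| Tax G p q : T G p q -> thm Sg Pi T G p q
| Trefl G p : form_j Sg Pi G p -> thm Sg Pi T G p p
| Tcut G p th q : thm Sg Pi T G p th -> thm Sg Pi T G th q -> thm Sg Pi T G p q
| TandE1 G th q : form_j Sg Pi G th -> form_j Sg Pi G q -> thm Sg Pi T G (FAnd th q) th
| TandE2 G th q : form_j Sg Pi G th -> form_j Sg Pi G q -> thm Sg Pi T G (FAnd th q) q
| TandI G p th q : thm Sg Pi T G p th -> thm Sg Pi T G p q -> thm Sg Pi T G p (FAnd th q)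
| Ttop G p : form_j Sg Pi G p -> thm Sg Pi T G p FTop
| TorI1 G th q : form_j Sg Pi G th -> form_j Sg Pi G q -> thm Sg Pi T G th (FOr th q)
| TorI2 G th q : form_j Sg Pi G th -> form_j Sg Pi G q -> thm Sg Pi T G q (FOr th q)
| TorE G th q p : thm Sg Pi T G th p -> thm Sg Pi T G q p -> thm Sg Pi T G (FOr th q) p
| Tbot G p : form_j Sg Pi G p -> thm Sg Pi T G FBot p
| TimpI G th q p : thm Sg Pi T G (FAnd th q) p -> thm Sg Pi T G th (FImp q p)
| TimpE G th q p : thm Sg Pi T G th (FImp q p) -> thm Sg Pi T G (FAnd th q) p
| TallI G x A p q : form_j Sg Pi G p -> form_j Sg Pi (rcons G (x, A)) q ->
    thm Sg Pi T (rcons G (x, A)) (wk G x A p) q -> thm Sg Pi T G p (FAll x A q)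
| TallE G x A p q : thm Sg Pi T G p (FAll x A q) -> thm Sg Pi T (rcons G (x, A)) (wk G x A p) q
| TexE G x A q p : form_j Sg Pi G p -> form_j Sg Pi (rcons G (x, A)) q ->
    thm Sg Pi T (rcons G (x, A)) q (wk G x A p) -> thm Sg Pi T G (FEx x A q) p
| TexI G x A q p : thm Sg Pi T G (FEx x A q) p -> thm Sg Pi T (rcons G (x, A)) q (wk G x A p)
| Tsubst G D as_ p q : thm Sg Pi T G p q -> is_morph Sg D G as_ ->
    thm Sg Pi T D (fsubst D G as_ p) (fsubst D G as_ q).

End Syntax.

Record heyting_ops (X : Type) := HOps {
  hle : X -> X -> Prop;
  htop : X; hbot : X;
  hmeet : X -> X -> X; hjoin : X -> X -> X; himp : X -> X -> X
}.

Definition is_heyting_prealgebra (X : Type) (P : X -> Prop) (H : heyting_ops X) : Prop :=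
  P (htop H) /\ P (hbot H) /\
  (forall x y, P x -> P y -> P (hmeet H x y) /\ P (hjoin H x y) /\ P (himp H x y)) /\
  (forall x, P x -> hle H x x) /\
  (forall x y z, P x -> P y -> P z -> hle H x y -> hle H y z -> hle H x z) /\
  (forall x, P x -> hle H (hbot H) x /\ hle H x (htop H)) /\
  (forall x y z, P x -> P y -> P z -> (hle H z (hmeet H x y) <-> hle H z x /\ hle H z y)) /\
  (forall x y z, P x -> P y -> P z -> (hle H (hjoin H x y) z <-> hle H x z /\ hle H y z)) /\
  (forall x y z, P x -> P y -> P z -> (hle H z (himp H x y) <-> hle H (hmeet H z x) y)).

Definition is_heyting_mor (X Y : Type) (P : X -> Prop) (H : heyting_ops X)
    (Q : Y -> Prop) (K : heyting_ops Y) (f : X -> Y) : Prop :=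
  (forall x, P x -> Q (f x)) /\
  (forall x y, P x -> P y -> hle H x y -> hle K (f x) (f y)) /\
  f (htop H) = htop K /\ f (hbot H) = hbot K /\
  (forall x y, P x -> P y ->
     f (hmeet H x y) = hmeet K (f x) (f y) /\ f (hjoin H x y) = hjoin K (f x) (f y) /\
     f (himp H x y) = himp K (f x) (f y)).

(* data (Pr, forall, exists) over the cwf F_Sigma; elements of Pr(G) are
   represented by X-values satisfying pr_car G (the tag G being implicit). *)
Record pr_struct (L : lang) (X : Type) := PrStruct {
  pr_car : ctx L -> X -> Prop;
  pr_ops : ctx L -> heyting_ops X;
  pr_map : ctx L -> ctx L -> seq (term L) -> X -> X;
  pr_all : ctx L -> pretype L -> X -> X;
  pr_ex  : ctx L -> pretype L -> X -> X
}.

Definition is_fo_hyperdoctrine (L : lang) (X : Type) (Sg : signature L)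
    (H : pr_struct L X) : Prop :=
  let car := pr_car H in let le G := hle (pr_ops H G) in let pm := pr_map H in
  (forall G, F_ob Sg G -> is_heyting_prealgebra (car G) (pr_ops H G)) /\
  (forall D G as_, is_morph Sg D G as_ ->
     is_heyting_mor (car G) (pr_ops H G) (car D) (pr_ops H D) (pm D G as_)) /\
  (forall G, F_ob Sg G -> forall x, car G x -> pm G G (idm G) x = x) /\
  (forall E D G as_ bs, is_morph Sg D G as_ -> is_morph Sg E D bs ->
     forall x, car G x -> pm E G (F_comp D as_ bs) x = pm E D bs (pm D G as_ x)) /\
  (forall G A, F_ob Sg G -> F_ty Sg G A ->
     (forall R, car (F_ext G A) R -> car G (pr_all H G A R) /\ car G (pr_ex H G A R)) /\
     (forall R R', car (F_ext G A) R -> car (F_ext G A) R' -> le (F_ext G A) R R' ->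
        le G (pr_all H G A R) (pr_all H G A R') /\ le G (pr_ex H G A R) (pr_ex H G A R')) /\
     (forall Q R, car G Q -> car (F_ext G A) R ->
        (le G Q (pr_all H G A R) <-> le (F_ext G A) (pm (F_ext G A) G (F_p G) Q) R) /\
        (le G (pr_ex H G A R) Q <-> le (F_ext G A) R (pm (F_ext G A) G (F_p G) Q)))) /\
  (forall D G as_ A, is_morph Sg D G as_ -> F_ty Sg G A ->
     forall R, car (F_ext G A) R ->
       pm D G as_ (pr_all H G A R) =
         pr_all H D (F_tysub G as_ A)
           (pm (F_ext D (F_tysub G as_ A)) (F_ext G A) (F_q D G as_ A) R) /\
       pm D G as_ (pr_ex H G A R) =
         pr_ex H D (F_tysub G as_ A)
           (pm (F_ext D (F_tysub G as_ A)) (F_ext G A) (F_q D G as_ A) R)).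

Definition LT (L : lang) (Sg : signature L) (Pi : psig L) (T : theory L) :
    pr_struct L (form L) :=
  {| pr_car := form_j Sg Pi;
     pr_ops := fun G => HOps (thm Sg Pi T G) (@FTop L) (@FBot L) (@FAnd L) (@FOr L) (@FImp L);
     pr_map := fun D G as_ p => fsubst D G as_ p;
     pr_all := fun G A p => FAll (fresh G) A p;
     pr_ex  := fun G A p => FEx (fresh G) A p |}.

(* Main.v *)
Require Import Defs.
From mathcomp Require Import all_boot.
Set Implicit Arguments. Unset Strict Implicit. Unset Printing Implicit Defensive.

Section Terms.
Variable L : lang.
Notation term := (term L).
Notation V := (V L).

Fixpoint All (P : term -> Prop) (s : seq term) : Prop :=
  match s with [::] => True | t :: s' => P t /\ All P s' end.

Section TI.
Variable P : term -> Prop.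
Hypothesis Hv : forall x, P (tvar x).
Hypothesis Ha : forall f ts, All P ts -> P (tapp f ts).
Fixpoint term_ind2 t : P t :=
  match t with
  | tvar x => Hv x
  | tapp f ts => Ha f ((fix go ts : All P ts :=
       match ts with [::] => I | t :: ts' => conj (term_ind2 t) (go ts') end) ts)
  end.
End TI.

Lemma tvars_app f ts : tvars (tapp f ts) = flatten (map (@tvars L) ts).
Proof. by elim: ts => //= t ts IH; rewrite -IH. Qed.

Lemma map_eq_sub (X : seq V) (f g : term -> term) ts :
  All (fun t => {subset tvars t <= X} -> f t = g t) ts ->
  {subset flatten (map (@tvars L) ts) <= X} -> map f ts = map g ts.
Proof.
elim: ts => //= t ts IH [H1 H2] Hs.
rewrite H1 ?IH // => y Hy; apply: Hs; rewrite mem_cat Hy ?orbT //.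
Qed.

Lemma map_eq_all (f g : term -> term) ts :
  All (fun t => f t = g t) ts -> map f ts = map g ts.
Proof. by elim: ts => //= t ts IH [-> /IH ->]. Qed.

Lemma tsubst_id (xs : seq V) (t : term) : tsubst xs (map (@tvar L) xs) t = t.
Proof.
elim/term_ind2: t => [x|f ts IH] /=.
  case: ifP => // xin; rewrite (nth_map x) ?index_mem ?nth_index //.
congr tapp; rewrite -[RHS]map_id; exact: map_eq_all.
Qed.

Lemma tsubst_comp (xs ys : seq V) (bs cs : seq term) (t : term) : {subset tvars t <= xs} -> size bs = size xs ->
  tsubst xs (map (tsubst ys cs) bs) t = tsubst ys cs (tsubst xs bs t).
Proof.
move=> + Hs; elim/term_ind2: t => [x|f ts IH] /= H.
  have xin : x \in xs by apply: H; rewrite inE.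
  by rewrite xin (nth_map (tvar x)) // Hs index_mem.
congr tapp; rewrite -map_comp; apply: (map_eq_sub IH).
by move=> y; rewrite -(tvars_app f); apply: H.
Qed.

Lemma tsubst_take i (xs : seq V) (as_ : seq term) (t : term) : {subset tvars t <= take i xs} ->
  tsubst (take i xs) (take i as_) t = tsubst xs as_ t.
Proof.
elim/term_ind2: t => [x|f ts IH] /= H.
  have xin : x \in take i xs by apply: H; rewrite inE.
  have H1 : index x (take i xs) < i.
    have H2 : index x (take i xs) < size (take i xs) by rewrite index_mem.
    apply: (leq_trans H2); rewrite size_take; case: ifP => // /negbT; rewrite -leqNgt //.
  rewrite xin (mem_take xin).
  have E : index x (take i xs) = index x xs.
    by rewrite -{2}(cat_take_drop i xs) index_cat xin.
  by rewrite E nth_take // -E.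
congr tapp; apply: (map_eq_sub IH). by move=> y; rewrite -(tvars_app f); apply: H.
Qed.

Lemma tsubst_rcons (xs : seq V) (z : V) (bs : seq term) (b t : term) : {subset tvars t <= xs} -> size bs = size xs ->
  tsubst (rcons xs z) (rcons bs b) t = tsubst xs bs t.
Proof.
move=> + Hs; elim/term_ind2: t => [x|f ts IH] /= H.
  have xin : x \in xs by apply: H; rewrite inE.
  rewrite xin -cats1 mem_cat xin /= index_cat xin -cats1 nth_cat Hs index_mem xin //.
congr tapp; apply: (map_eq_sub IH). by move=> y; rewrite -(tvars_app f); apply: H.
Qed.


Lemma All_of (P : term -> Prop) ts : (forall t, P t) -> All P ts.
Proof. by move=> H; elim: ts => //= t ts ->; split. Qed.

Lemma ptvarsE S ts : ptvars (ptype S ts) = flatten (map (@tvars L) ts).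
Proof. by []. Qed.

Lemma psubst_id (xs : seq V) A : psubst xs (map (@tvar L) xs) A = A.
Proof.
case: A => S ts /=; congr ptype; rewrite -[RHS]map_id; apply: map_eq_all.
by apply: All_of => t; exact: tsubst_id.
Qed.

Lemma map_tsubst_id (xs : seq V) ts : map (tsubst xs (map (@tvar L) xs)) ts = ts.
Proof. rewrite -[RHS]map_id; apply: map_eq_all; apply: All_of => t; exact: tsubst_id. Qed.

Lemma map_tsubst_comp (xs ys : seq V) (bs cs : seq term) ts :
  {subset flatten (map (@tvars L) ts) <= xs} -> size bs = size xs ->
  map (tsubst xs (map (tsubst ys cs) bs)) ts = map (tsubst ys cs) (map (tsubst xs bs) ts).
Proof.
move=> H Hs; rewrite -map_comp; apply: (map_eq_sub _ H).
by apply: All_of => t Ht; apply: tsubst_comp.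
Qed.

Lemma psubst_comp (xs ys : seq V) (bs cs : seq term) A :
  {subset ptvars A <= xs} -> size bs = size xs ->
  psubst xs (map (tsubst ys cs) bs) A = psubst ys cs (psubst xs bs A).
Proof. by case: A => S ts H Hs /=; rewrite map_tsubst_comp. Qed.

Lemma psubst_take i (xs : seq V) (as_ : seq term) A : {subset ptvars A <= take i xs} ->
  psubst (take i xs) (take i as_) A = psubst xs as_ A.
Proof.
case: A => S ts H /=; congr ptype; apply: (map_eq_sub _ H).
by apply: All_of => t Ht; apply: tsubst_take.
Qed.

Lemma map_tsubst_rcons (xs : seq V) (z : V) (bs : seq term) (b : term) ts :
  {subset flatten (map (@tvars L) ts) <= xs} -> size bs = size xs ->
  map (tsubst (rcons xs z) (rcons bs b)) ts = map (tsubst xs bs) ts.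
Proof.
move=> H Hs; apply: (map_eq_sub _ H).
by apply: All_of => t Ht; apply: tsubst_rcons.
Qed.

Lemma psubst_rcons (xs : seq V) (z : V) (bs : seq term) (b : term) A :
  {subset ptvars A <= xs} -> size bs = size xs ->
  psubst (rcons xs z) (rcons bs b) A = psubst xs bs A.
Proof. by case: A => S ts H Hs /=; rewrite map_tsubst_rcons. Qed.

Lemma onth_sz {A B : Type} (s : seq A) (t : seq B) k a :
  size s = size t -> onth s k = Some a -> exists b, onth t k = Some b.
Proof.
move=> E H; have : (k < size t) by rewrite -E -onthTE H.
by rewrite -onthTE; case: onth => // b _; exists b.
Qed.

Lemma onth_sel {X : Type} ix (s : seq X) k a :
  onth (sel ix s) k = Some a -> exists k', onth s k' = Some a.
Proof.
rewrite /sel; elim: ix k => [|i ix IH] k; first by rewrite /= onth0n.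
rewrite /=; case E: (onth s i) => [b|] /=; last exact: IH.
case: k => [|k] /=; last exact: IH.
by case=> <-; exists i.
Qed.

Lemma map_sel {X Y : Type} (f : X -> Y) ix s : map f (sel ix s) = sel ix (map f s).
Proof.
rewrite /sel; elim: ix => [|i ix IH] //=.
by rewrite onth_map; case: (onth s i) => [b|] //=; rewrite IH.
Qed.

Lemma sub_flatten (s : seq term) (X : seq V) :
  (forall k a, onth s k = Some a -> {subset tvars a <= X}) ->
  {subset flatten (map (@tvars L) s) <= X}.
Proof.
elim: s => [|t s IH] H y //=; rewrite mem_cat => /orP [Hy|Hy].
  exact: (H 0 t).
by apply: (IH _ y Hy) => k a Ha; apply: (H k.+1).
Qed.

Lemma sub_flatten_sel ix (s : seq term) (X : seq V) :
  (forall k a, onth s k = Some a -> {subset tvars a <= X}) ->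
  {subset flatten (map (@tvars L) (sel ix s)) <= X}.
Proof.
move=> H; apply: sub_flatten => k a Ha; have [k' Hk'] := onth_sel Ha; exact: (H _ _ Hk').
Qed.

Lemma sub_flatten_inv (s : seq term) (X : seq V) k a :
  {subset flatten (map (@tvars L) s) <= X} -> onth s k = Some a -> {subset tvars a <= X}.
Proof.
elim: s k => [|t s IH] [|k] //= H; first by case=> <- y Hy; apply: H; rewrite mem_cat Hy.
by apply: IH => y Hy; apply: H; rewrite mem_cat Hy orbT.
Qed.

Lemma in_OV (G : ctx L) i x A : onth G i = Some (x, A) -> x \in OV G.
Proof. by move=> H; apply/onthP; exists i; rewrite /OV onth_map H. Qed.

Lemma OV_sub (G : ctx L) : {subset OV G <= ctx_vars G}.
Proof.
elim: G => [|[x A] G IH] y //=; rewrite !inE => /orP [->//|/IH Hy].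
by rewrite mem_cat Hy !orbT.
Qed.

Lemma OV_rcons (G : ctx L) x A : OV (rcons G (x, A)) = rcons (OV G) x.
Proof. by rewrite /OV map_rcons. Qed.

Lemma onth_rcons {X : Type} (s : seq X) e k :
  onth (rcons s e) k = if k < size s then onth s k else if k == size s then Some e else None.
Proof.
rewrite -cats1 onth_cat; case: ltnP => // H.
case: eqP => [->|ne]; first by rewrite subnn.
have : 0 < k - size s.
  by rewrite subn_gt0 ltn_neqAle eq_sym; apply/andP; split=> //; apply/eqP.
by case: (k - size s) => [|n] //= _; rewrite onth0n.
Qed.

Lemma take_rcons_le {X : Type} (s : seq X) e k : k <= size s -> take k (rcons s e) = take k s.
Proof. by move=> H; rewrite -cats1 takel_cat. Qed.

Lemma take_rcons_size {X : Type} (s : seq X) e : take (size s) (rcons s e) = s.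
Proof. by rewrite -cats1 take_size_cat. Qed.

Section JSec.
Variable Sg : signature L.

Definition jvars (j : judg L) : Prop :=
  match j with
  | JCtx _ => True
  | JTy G A => {subset ptvars A <= OV G}
  | JTm G a _ => {subset tvars a <= OV G}
  end.

Lemma J_vars j : J Sg j -> jvars j.
Proof.
elim => //=.
- by move=> G i x A _ _ H y; rewrite inE => /eqP ->; exact: in_OV H.
- move=> S0 G ix D as_ _ _ _ _ _ Hsz _ IH.
  apply: sub_flatten_sel => k a Ha.
  have [[x A] HG] := onth_sz Hsz Ha; exact: IH Ha HG.
- move=> f G ix U D as_ _ _ _ _ _ Hsz _ IH _ _.
  change {subset tvars (tapp f (sel ix as_)) <= OV D}; rewrite tvars_app; apply: sub_flatten_sel => k a Ha.
  have [[x A] HG] := onth_sz Hsz Ha; exact: IH Ha HG.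
Qed.

Lemma J_ty_vars G A : J Sg (JTy G A) -> {subset ptvars A <= OV G}.
Proof. exact: (@J_vars (JTy G A)). Qed.
Lemma J_tm_vars G a A : J Sg (JTm G a A) -> {subset tvars a <= OV G}.
Proof. exact: (@J_vars (JTm G a A)). Qed.

Definition jctx (j : judg L) : Prop :=
  match j with JCtx _ => True | JTy G _ => J Sg (JCtx G) | JTm G _ _ => J Sg (JCtx G) end.
Lemma J_ctx j : J Sg j -> jctx j.
Proof. by case. Qed.
Lemma J_ty_ctx G A : J Sg (JTy G A) -> J Sg (JCtx G).
Proof. exact: (@J_ctx (JTy G A)). Qed.
Lemma J_tm_ctx G a A : J Sg (JTm G a A) -> J Sg (JCtx G).
Proof. exact: (@J_ctx (JTm G a A)). Qed.

Definition jentry (j : judg L) : Prop :=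
  match j with
  | JCtx G => forall k x A, onth G k = Some (x, A) ->
      J Sg (JCtx (take k G)) /\ J Sg (JTy (take k G) A) /\ Fresh (take k G) x
  | _ => True
  end.

Lemma J_entry j : J Sg j -> jentry j.
Proof.
elim => //=.
- by move=> k x A; rewrite onth0n.
- move=> G A x HG IH HA _ Hfr k y B; rewrite onth_rcons.
  case: ltnP => Hk.
    by rewrite take_rcons_le; [apply: IH | apply: ltnW].
  case: eqP => // -> [<- <-].
  by rewrite take_rcons_size.
Qed.

Lemma J_entry_ty G k x A : J Sg (JCtx G) -> onth G k = Some (x, A) ->
  {subset ptvars A <= take k (OV G)}.
Proof.
move=> HG Hk; have [_ [HA _]] := @J_entry _ HG k x A Hk.
by rewrite /OV -map_take; apply: J_ty_vars.
Qed.

Lemma J_rcons G x A : J Sg (JCtx (rcons G (x, A))) ->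
  J Sg (JCtx G) /\ J Sg (JTy G A) /\ Fresh G x.
Proof.
move=> H; have := @J_entry _ H (size G) x A.
by rewrite onth_rcons ltnn eqxx take_rcons_size; apply.
Qed.

Hypothesis FP : fresh_provider L.

Lemma fresh_not (G : ctx L) x : Fresh G x -> x \notin OV G.
Proof.
case: FP => _ [_ [H _]] /H; apply: contra; exact: OV_sub.
Qed.

Lemma fresh_fresh (G : ctx L) : Fresh G (fresh G).
Proof. by case: FP => _ [_ [_ H]]; apply: H. Qed.

Lemma J_uniq G : J Sg (JCtx G) -> uniq (OV G).
Proof.
have : forall j, J Sg j -> (if j is JCtx G1 then is_true (uniq (OV G1)) else True).
  move=> j; elim => //= G2 A x _ IH _ _ Hfr.
  by rewrite OV_rcons rcons_uniq IH fresh_not.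
by move=> H /H.
Qed.

Lemma index_OV (G : ctx L) i x A : uniq (OV G) -> onth G i = Some (x, A) -> index x (OV G) = i.
Proof.
move=> U H.
have Hi : i < size (OV G) by rewrite size_map -onthTE H.
have Hx : nth x (OV G) i = x by rewrite (onth_nth x x) // /OV onth_map H.
by rewrite -{1}Hx index_uniq.
Qed.


Hypothesis SG : is_signature Sg.

Lemma morph_build D D0 G0 as_ bs : J Sg (JCtx D) -> J Sg (JCtx G0) -> size bs = size G0 ->
  (forall k b x A, onth bs k = Some b -> onth G0 k = Some (x, A) ->
    J Sg (JTm D (tsubst (OV D0) as_ b)
       (psubst (OV D0) as_ (psubst (take k (OV G0)) (take k bs) A)))) ->
  is_morph Sg D G0 (map (tsubst (OV D0) as_) bs).
Proof.
move=> HD HG0 Hsz H; split; [done|split; [done|split; [by rewrite size_map|]]].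
move=> k a x A; rewrite onth_map; case Eb: (onth bs k) => [b|] //= [<-] HGk.
have Hk : k < size G0 by rewrite -onthTE HGk.
rewrite -map_take psubst_comp.
- exact: H Eb HGk.
- exact: J_entry_ty HG0 HGk.
- rewrite !size_takel // ?size_map ?Hsz; exact: ltnW.
Qed.

Definition jsubst (j : judg L) : Prop :=
  match j with
  | JCtx _ => True
  | JTy G A => forall D as_, is_morph Sg D G as_ -> J Sg (JTy D (psubst (OV G) as_ A))
  | JTm G a A => forall D as_, is_morph Sg D G as_ ->
      J Sg (JTm D (tsubst (OV G) as_ a) (psubst (OV G) as_ A))
  end.

Lemma J_subst j : J Sg j -> jsubst j.
Proof.
elim => //=.
- move=> G i x A HG _ Hi D as_ [HD [_ [Hsz Has]]].
  rewrite (in_OV Hi) (index_OV (J_uniq HG) Hi).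
  have [a Ha] := onth_sz (esym Hsz) Hi.
  rewrite (onth_nth (tvar x) _ _ _ Ha).
  rewrite -(psubst_take (i := i)); last exact: J_entry_ty HG Hi.
  exact: Has Ha Hi.
- move=> S0 G0 ix D0 bs Hdecl HD0 _ HG0 _ Hsz _ IH D as_ Hm.
  have := morph_build (D0 := D0) (as_ := as_) Hm.1 HG0 Hsz
    (fun k b x A Hb HGk => IH k b x A Hb HGk D as_ Hm) => -[_ [_ [Hs H]]].
  rewrite map_sel; exact: (R4 Hdecl Hm.1 HG0 Hs H).
- move=> f G0 ix U D0 bs Hdecl HD0 _ HG0 _ Hsz _ IH HU IHU D as_ Hm.
  have HUv : {subset ptvars U <= OV G0}.
    by have [_ [_ [_ [_ HU0]]]] := SG.2 f G0 ix U Hdecl; apply: J_ty_vars HU0.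
  have := morph_build (D0 := D0) (as_ := as_) Hm.1 HG0 Hsz
    (fun k b x A Hb HGk => IH k b x A Hb HGk D as_ Hm) => -[_ [_ [Hs H]]].
  have := IHU D as_ Hm.
  rewrite map_sel -psubst_comp ?size_map // => HU'.
  exact: (R5 Hdecl Hm.1 HG0 Hs H HU').
Qed.

Lemma J_subst_ty G A D as_ : J Sg (JTy G A) -> is_morph Sg D G as_ -> J Sg (JTy D (psubst (OV G) as_ A)).
Proof. by move=> H; apply: (@J_subst _ H). Qed.

Lemma J_subst_tm G a A D as_ : J Sg (JTm G a A) -> is_morph Sg D G as_ ->
  J Sg (JTm D (tsubst (OV G) as_ a) (psubst (OV G) as_ A)).
Proof. by move=> H; apply: (@J_subst _ H). Qed.

Lemma idm_morph D y C : J Sg (JCtx (rcons D (y, C))) -> is_morph Sg (rcons D (y, C)) D (idm D).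
Proof.
move=> H; have [HD _] := J_rcons H.
split=> //; split=> //; split; first by rewrite /idm !size_map.
move=> k a x A; rewrite /idm /OV !onth_map.
case Ek: (onth D k) => [[x' A']|] //= [<-] [_ <-].
have -> : take k (map (@tvar L) (map fst D)) = map (@tvar L) (take k (map fst D)) by rewrite map_take.
rewrite psubst_id.
apply: (R3 (i := k)) H _.
by rewrite onth_rcons -onthTE Ek.
Qed.

Lemma J_weak D y C a B : J Sg (JCtx (rcons D (y, C))) -> J Sg (JTm D a B) ->
  J Sg (JTm (rcons D (y, C)) a B).
Proof.
move=> H Ha; have := J_subst_tm Ha (idm_morph H).
by rewrite /idm tsubst_id psubst_id.
Qed.

Lemma morph_ext D G as_ x A : is_morph Sg D G as_ -> J Sg (JCtx (rcons G (x, A))) ->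
  is_morph Sg (rcons D (fresh D, psubst (OV G) as_ A)) (rcons G (x, A))
    (rcons as_ (tvar (fresh D))).
Proof.
move=> Hm HG'; have [HG [HA _]] := J_rcons HG'.
have HA' := J_subst_ty HA Hm.
have HD' := R2 Hm.1 HA' (fresh_fresh D).
case: Hm => HD [_ [Hsz Has]].
split=> //; split=> //; split; first by rewrite !size_rcons Hsz.
move=> k a y B; rewrite !onth_rcons Hsz OV_rcons.
case: ltnP => Hk.
  move=> Ha HGk.
  have Hk1 : k <= size (OV G) by rewrite size_map ltnW.
  have Hk2 : k <= size as_ by rewrite Hsz ltnW.
  rewrite (take_rcons_le _ Hk1) (take_rcons_le _ Hk2).
  exact: J_weak HD' (Has _ _ _ _ Ha HGk).
case: eqP => // Ek [<-] [_ <-]; subst k.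
have -> : take (size G) (rcons (OV G) x) = OV G by rewrite -(size_map fst G) take_rcons_size.
rewrite -Hsz take_rcons_size.
apply: (R3 (i := size D)) HD' _.
by rewrite onth_rcons ltnn eqxx.
Qed.

Lemma morph_comp D G G0 as_ bs : is_morph Sg D G as_ -> is_morph Sg G G0 bs ->
  is_morph Sg D G0 (map (tsubst (OV G) as_) bs).
Proof.
move=> Hm [_ [HG0 [Hsz Hbs]]].
apply: morph_build Hm.1 HG0 Hsz _ => k b x A Hb HGk.
exact: J_subst_tm (Hbs _ _ _ _ Hb HGk) Hm.
Qed.

Lemma morph_vars D G as_ k a : is_morph Sg D G as_ -> onth as_ k = Some a -> {subset tvars a <= OV D}.
Proof.
move=> [_ [_ [Hsz Has]]] Ha.
have [[x A] HG] := onth_sz Hsz Ha; exact: J_tm_vars (Has _ _ _ _ Ha HG).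
Qed.

Section Forms.
Variable Pi : psig L.

Lemma form_ctx G p : form_j Sg Pi G p -> J Sg (JCtx G).
Proof.
elim => //.
- by move=> R G0 ix D as_ _ [].
- by move=> G0 x A p0 HA *; exact: J_ty_ctx HA.
- by move=> G0 x A p0 HA *; exact: J_ty_ctx HA.
Qed.

Lemma form_subst G p : form_j Sg Pi G p ->
  forall D as_, is_morph Sg D G as_ -> form_j Sg Pi D (fsubst D G as_ p).
Proof.
elim => /=.
- move=> R G0 ix D0 bs HPi Hm0 D as_ Hm.
  by rewrite map_sel; apply: FJpred HPi (morph_comp Hm Hm0).
- by move=> G0 _ D as_ Hm; apply: FJbot; case: Hm.
- by move=> G0 _ D as_ Hm; apply: FJtop; case: Hm.
- by move=> G0 p0 q _ IHp _ IHq D as_ Hm; apply: FJand; [apply: IHp|apply: IHq].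
- by move=> G0 p0 q _ IHp _ IHq D as_ Hm; apply: FJor; [apply: IHp|apply: IHq].
- by move=> G0 p0 q _ IHp _ IHq D as_ Hm; apply: FJimp; [apply: IHp|apply: IHq].
- move=> G0 x A p0 HA Hp IH D as_ Hm; apply: FJall; first exact: J_subst_ty HA Hm.
  by apply: IH; apply: morph_ext Hm (form_ctx Hp).
- move=> G0 x A p0 HA Hp IH D as_ Hm; apply: FJex; first exact: J_subst_ty HA Hm.
  by apply: IH; apply: morph_ext Hm (form_ctx Hp).
Qed.


Lemma form_id (DB : de_bruijn L) G p : form_j Sg Pi G p -> fsubst G G (idm G) p = p.
Proof.
elim => /=.
- by move=> R G0 ix D0 bs _ _; rewrite /idm map_tsubst_id.
- by [].
- by [].
- by move=> G0 p0 q _ -> _ ->.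
- by move=> G0 p0 q _ -> _ ->.
- by move=> G0 p0 q _ -> _ ->.
- move=> G0 x A p0 HA Hp IH.
  have [_ [_ Hfr]] := J_rcons (form_ctx Hp).
  have Ex : x = fresh G0 by apply/DB.
  by rewrite /idm psubst_id -Ex -(map_rcons (@tvar L)) -(OV_rcons G0 x A) [fsubst _ _ _ p0]IH.
- move=> G0 x A p0 HA Hp IH.
  have [_ [_ Hfr]] := J_rcons (form_ctx Hp).
  have Ex : x = fresh G0 by apply/DB.
  by rewrite /idm psubst_id -Ex -(map_rcons (@tvar L)) -(OV_rcons G0 x A) [fsubst _ _ _ p0]IH.
Qed.

Lemma index_rcons_notin (T0 : eqType) (s : seq T0) x : x \notin s -> index x (rcons s x) = size s.
Proof. by move=> H; rewrite -cats1 index_cat (negbTE H) /= eqxx addn0. Qed.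

Lemma Fcomp_ext D as_ bs A b :
  size bs = size D -> {subset flatten (map (@tvars L) as_) <= OV D} ->
  F_comp (rcons D (fresh D, A)) (rcons as_ (tvar (fresh D))) (rcons bs b)
  = rcons (F_comp D as_ bs) b.
Proof.
move=> Hbs Hv; rewrite /F_comp OV_rcons map_rcons map_tsubst_rcons ?size_map //.
congr rcons; rewrite /= mem_rcons inE eqxx /= (index_rcons_notin (fresh_not (fresh_fresh D))).
by rewrite nth_rcons /OV size_map Hbs ltnn eqxx.
Qed.

Lemma bind_comp G0 x A p0 D E as_ bs :
  J Sg (JTy G0 A) ->
  (forall D E as_ bs, size as_ = size (rcons G0 (x, A)) ->
     {subset flatten (map (@tvars L) as_) <= OV D} -> size bs = size D ->
     fsubst E (rcons G0 (x, A)) (F_comp D as_ bs) p0 = fsubst E D bs (fsubst D (rcons G0 (x, A)) as_ p0)) ->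
  size as_ = size G0 -> {subset flatten (map (@tvars L) as_) <= OV D} -> size bs = size D ->
  psubst (OV G0) (F_comp D as_ bs) A = psubst (OV D) bs (psubst (OV G0) as_ A) /\
  fsubst (rcons E (fresh E, psubst (OV D) bs (psubst (OV G0) as_ A))) (rcons G0 (x, A))
    (rcons (F_comp D as_ bs) (tvar (fresh E))) p0 =
  fsubst (rcons E (fresh E, psubst (OV D) bs (psubst (OV G0) as_ A)))
    (rcons D (fresh D, psubst (OV G0) as_ A)) (rcons bs (tvar (fresh E)))
    (fsubst (rcons D (fresh D, psubst (OV G0) as_ A)) (rcons G0 (x, A))
       (rcons as_ (tvar (fresh D))) p0).
Proof.
move=> HA IH Hsz Hv Hbs; split.
  by rewrite /F_comp psubst_comp ?size_map //; exact: J_ty_vars HA.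
rewrite -(Fcomp_ext (psubst (OV G0) as_ A) _ Hbs Hv) IH //.
- by rewrite !size_rcons Hsz.
- rewrite map_rcons flatten_rcons OV_rcons => y; rewrite mem_cat mem_rcons inE.
  by case/orP => [/Hv ->|]; rewrite ?orbT // inE => ->.
- by rewrite !size_rcons Hbs.
Qed.

Lemma form_comp G p : form_j Sg Pi G p ->
  forall D E as_ bs, size as_ = size G -> {subset flatten (map (@tvars L) as_) <= OV D} ->
  size bs = size D ->
  fsubst E G (F_comp D as_ bs) p = fsubst E D bs (fsubst D G as_ p).
Proof.
elim => /=.
- move=> R G0 ix D0 bs0 _ Hm0 D E as_ bs Hsz Hv Hbs.
  rewrite /F_comp map_tsubst_comp ?size_map //.
  apply: sub_flatten_sel => k a Ha; exact: morph_vars Hm0 Ha.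
- by [].
- by [].
- by move=> G0 p0 q _ IHp _ IHq D E as_ bs Hsz Hv Hbs; rewrite IHp ?IHq.
- by move=> G0 p0 q _ IHp _ IHq D E as_ bs Hsz Hv Hbs; rewrite IHp ?IHq.
- by move=> G0 p0 q _ IHp _ IHq D E as_ bs Hsz Hv Hbs; rewrite IHp ?IHq.
- move=> G0 x A p0 HA Hp IH D E as_ bs Hsz Hv Hbs.
  by have [-> ->] := bind_comp E HA IH Hsz Hv Hbs.
- move=> G0 x A p0 HA Hp IH D E as_ bs Hsz Hv Hbs.
  by have [-> ->] := bind_comp E HA IH Hsz Hv Hbs.
Qed.

End Forms.
End JSec.
End Terms.

Theorem mainTheorem17 (L : lang) (Sg : signature L) (Pi : psig L) (T : theory L) :
  fresh_provider L -> de_bruijn L ->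
  is_signature Sg -> is_psig Sg Pi -> is_theory Sg Pi T ->
  is_fo_hyperdoctrine Sg (LT Sg Pi T) /\
  (forall (G : ctx L) (p q : form L), form_j Sg Pi G p -> form_j Sg Pi G q ->
     (hle (pr_ops (LT Sg Pi T) G) p q <-> thm Sg Pi T G p q)).
Proof.
move=> FP DB SG HPi HT; split; last by move=> G p q _ _; split.
rewrite /is_fo_hyperdoctrine /=.
split; [|split; [|split; [|split; [|split]]]].
- move=> G HG; rewrite /is_heyting_prealgebra /=.
  split; first exact: FJtop.
  split; first exact: FJbot.
  split; first by move=> x y Hx Hy; split; [apply: FJand|split; [apply: FJor|apply: FJimp]].
  split; first by move=> x Hx; apply: Trefl.
  split; first by move=> x y z _ _ _ H1 H2; apply: Tcut H1 H2.
  split; first by move=> x Hx; split; [apply: Tbot|apply: Ttop].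
  split.
    move=> x y z Hx Hy Hz; split => [H|[H1 H2]]; last exact: TandI H1 H2.
    by split; apply: Tcut H _; [apply: TandE1 Hx Hy|apply: TandE2 Hx Hy].
  split.
    move=> x y z Hx Hy Hz; split => [H|[H1 H2]]; last exact: TorE H1 H2.
    by split; apply: Tcut _ H; [apply: TorI1 Hx Hy|apply: TorI2 Hx Hy].
  move=> x y z Hx Hy Hz; split => H; [exact: TimpE H|exact: TimpI H].
- move=> D G as_ Hm; split; first by move=> x Hx; exact: (form_subst FP SG Hx Hm).
  split; first by move=> x y _ _ H; exact: Tsubst H Hm.
  by split; [|split; [|move=> x y _ _; split; [|split]]].
- by move=> G HG x Hx; exact: (form_id DB Hx).
- move=> E D G as_ bs Hm Hm' x Hx.
  apply: (form_comp FP Hx E Hm.2.2.1 _ Hm'.2.2.1).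
  by apply: sub_flatten => k a Ha; exact: morph_vars Hm Ha.
- move=> G A HG HA.
  have Hc : forall R, form_j Sg Pi (F_ext G A) R ->
      form_j Sg Pi G (FAll (fresh G) A R) /\ form_j Sg Pi G (FEx (fresh G) A R).
    by move=> R HR; split; [apply: FJall HA HR|apply: FJex HA HR].
  split; first exact: Hc.
  split.
    move=> R R' HR HR' H; split.
      apply: TallI (Hc R HR).1 HR' _.
      apply: Tcut _ H; apply: TallE; apply: Trefl; exact: (Hc R HR).1.
    apply: TexE (Hc R' HR').2 HR _.
    apply: Tcut H _; apply: TexI; apply: Trefl; exact: (Hc R' HR').2.
  move=> Q R HQ HR; split; split => H.
  + exact: TallE H.
  + exact: TallI HQ HR H.
  + exact: TexI H.
  + exact: TexE HQ HR H.
- move=> D G as_ A Hm HA R HR /=.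
  by rewrite /F_q /F_comp /F_p /idm map_tsubst_id.
Qed.
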